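(* For $\hat{\Sigma}$ and $\bar{\Sigma}$, we have $\rho(\hat{\boldsymbol{\mathcal{A}}}) = \rho(\bar{\boldsymbol{\mathcal{A}}})$ and $\xi(\hat{\mathbf{A}}_{1:r}) = \xi(\bar{\mathbf{A}}_{1:s})$.
   Context: $\Sigma$ is the MJS $\mathbf{x}_{t+1}=\mathbf{A}_{\omega_t}\mathbf{x}_t+\mathbf{B}_{\omega_t}\mathbf{u}_t$ with $s$ modes and Markov transition matrix $\mathbf{T}$. Given a partition $\hat{\Omega}_{1:r}$ of $[s]$, the reduced MJS $\hat{\Sigma}$ has $r$ modes with $\hat{\mathbf{A}}_k=\frac{1}{|\hat{\Omega}_k|}\sum_{i\in\hat{\Omega}_k}\mathbf{A}_i$, $\hat{\mathbf{B}}_k=\frac{1}{|\hat{\Omega}_k|}\sum_{i\in\hat{\Omega}_k}\mathbf{B}_i$, $\hat{\mathbf{T}}(k,l)=\frac{1}{|\hat{\Omega}_k|}\sum_{i\in\hat{\Omega}_k,j\in\hat{\Omega}_l}\mathbf{T}(i,j)$. The expanded MJS $\bar{\Sigma}$ has $s$ modes with $\bar{\mathbf{A}}_i=\hat{\mathbf{A}}_k$, $\bar{\mathbf{B}}_i=\hat{\mathbf{B}}_k$ for $i\in\hat{\Omega}_k$, and a Markov matrix $\bar{\mathbf{T}}$ satisfying $\sum_{j\in\hat{\Omega}_l}\bar{\mathbf{T}}(i,j)=\hat{\mathbf{T}}(k,l)$ for all $k,l$ and $i\in\hat{\Omega}_k$ (and $\|\bar{\mathbf{T}}-\mathbf{T}\|_\infty,\|\bar{\mathbf{T}}-\mathbf{T}\|_F\le\epsilon_{\mathbf{T}}$).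 The augmented state matrix $\hat{\boldsymbol{\mathcal{A}}}\in\mathbb{R}^{rn^2\times rn^2}$ has $ij$-th $n^2\times n^2$ block $\hat{\mathbf{T}}(j,i)\,\hat{\mathbf{A}}_j\otimes\hat{\mathbf{A}}_j$, and $\bar{\boldsymbol{\mathcal{A}}}\in\mathbb{R}^{sn^2\times sn^2}$ has $ij$-th block $\bar{\mathbf{T}}(j,i)\,\bar{\mathbf{A}}_j\otimes\bar{\mathbf{A}}_j$; $\rho(\cdot)$ is the spectral radius and $\xi(\cdot)$ the joint spectral radius $\xi(\mathbf{M}_{1:m})=\lim_{k\to\infty}\max_{\sigma_{1:k}}\|\mathbf{M}_{\sigma_1}\cdots\mathbf{M}_{\sigma_k}\|^{1/k}$. *)

(* Defs.v *)
From HB Require Import structures.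
From mathcomp Require Import all_boot all_order all_algebra.
From mathcomp Require Import all_classical all_reals all_analysis.
From mathcomp Require Import complex mxtens.
Set Implicit Arguments. Unset Strict Implicit. Unset Printing Implicit Defensive.
Import Order.TTheory GRing.Theory Num.Theory.
Import numFieldNormedType.Exports.
Local Open Scope ring_scope.
Local Open Scope classical_set_scope.

Section Defs.
Variable R : realType.

Definition stochastic_mx (s : nat) (T : 'M[R]_s) : Prop :=
  (forall i j, 0 <= T i j) /\ (forall i, \sum_(j < s) T i j = 1).

Definition cmod (z : R[i]) : R := Num.sqrt (complex.Re z ^+ 2 + complex.Im z ^+ 2).

Definition specrad (k : nat) (M : 'M[R]_k) : R :=
  sup [set cmod l | l in
        [set l : R[i] | eigenvalue (map_mx (fun x : R => (x%:C)%C) M) l]].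

Definition mxprod (m n : nat) (M : 'I_m -> 'M[R]_n) (sg : seq 'I_m) : 'M[R]_n :=
  foldr (fun i P => M i *m P) 1%:M sg.

(* joint spectral radius, computed with the max-entry matrix norm (the limit
   is independent of the chosen norm); index k.+1 = length of the products. *)
Definition jsr (m n : nat) (M : 'I_m -> 'M[R]_n) : R :=
  limn (fun k : nat =>
    (\big[Order.max/0]_(sg : {ffun 'I_k.+1 -> 'I_m})
        `| mxprod M [seq sg i | i <- enum 'I_k.+1] |) `^ (k.+1%:R^-1)).

(* reduced system built from a partition encoded by a labelling f : [s] -> [r];
   block k is Omega_k = [set i | f i == k]. *)
Definition redA (s r n : nat) (A : 'I_s -> 'M[R]_n) (f : 'I_s -> 'I_r)
  (k : 'I_r) : 'M[R]_n :=
  (#|[set i | f i == k]|%:R)^-1 *: \sum_(i | f i == k) A i.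

Definition redT (s r : nat) (T : 'M[R]_s) (f : 'I_s -> 'I_r) : 'M[R]_r :=
  \matrix_(k, l) ((#|[set i | f i == k]|%:R)^-1 *
                  \sum_(i | f i == k) \sum_(j | f j == l) T i j).

Definition augA (m n : nat) (T : 'M[R]_m) (A : 'I_m -> 'M[R]_n) :
  'M[R]_(\sum_(i < m) (n * n)) :=
  @mxblock R m m (fun _ => (n * n)%N) (fun _ => (n * n)%N)
    (fun i j => T j i *: (A j *t A j)).

End Defs.

(* Main.v *)
Require Import Defs.
From HB Require Import structures.
From mathcomp Require Import all_boot all_order all_algebra.
From mathcomp Require Import all_classical all_reals all_analysis.
From mathcomp Require Import complex mxtens.
From mathcomp Require Import ring lra.
Import Order.TTheory GRing.Theory Num.Theory.
Local Open Scope ring_scope.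

Set Implicit Arguments. Unset Strict Implicit. Unset Printing Implicit Defensive.


Section Cmod.
Variable R : realType.
Local Open Scope complex_scope.

Lemma cmodE (z : R[i]) : `|z| = (cmod z)%:C.
Proof. by rewrite normc_def. Qed.

Lemma cmodRe (z : R[i]) : cmod z = complex.Re `|z|.
Proof. by rewrite cmodE. Qed.

Lemma cmod_ge0 (z : R[i]) : 0 <= cmod z.
Proof. exact: sqrtr_ge0. Qed.

Lemma cmodD (x y : R[i]) : cmod (x + y) <= cmod x + cmod y.
Proof. by rewrite -lecR rmorphD /= -!cmodE ler_normD. Qed.

Lemma cmodM (x y : R[i]) : cmod (x * y) = cmod x * cmod y.
Proof. by rewrite !cmodRe normrM !cmodE -rmorphM. Qed.

Lemma cmodX (x : R[i]) k : cmod (x ^+ k) = cmod x ^+ k.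
Proof. by rewrite !cmodRe normrX cmodE -rmorphXn. Qed.

Lemma cmodR (x : R) : cmod (x%:C) = `|x|.
Proof. by rewrite /cmod /= expr0n /= addr0 sqrtr_sqr. Qed.

Lemma cmod0 : cmod (0 : R[i]) = 0.
Proof. by rewrite -(rmorph0 (@real_complex R)) cmodR normr0. Qed.

Lemma cmod_eq0 (z : R[i]) : cmod z = 0 -> z = 0.
Proof. by move=> h; apply/eqP; rewrite -normr_eq0 cmodE h rmorph0. Qed.

Lemma cmod_sum (I : Type) (l : seq I) (P : pred I) (F : I -> R[i]) :
  cmod (\sum_(i <- l | P i) F i) <= \sum_(i <- l | P i) cmod (F i).
Proof.
elim: l => [|a l IH]; first by rewrite !big_nil cmod0.
rewrite !big_cons; case: (P a) => //.
by apply: le_trans (cmodD _ _) _; rewrite lerD2l.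
Qed.

End Cmod.


Section Growth.
Variable R : realType.
Local Open Scope complex_scope.

Lemma growth_aux m (Mc : 'M[R[i]]_m.+1) (rho eps : R) : 0 <= rho -> 0 < eps ->
  forall ls : seq R[i], (forall z, z \in ls -> cmod z <= rho) ->
  forall Y : 'M[R[i]]_m.+1,
  Y *m horner_mx Mc (\prod_(z <- ls) ('X - z%:P)) = 0 ->
  exists K, 0 <= K /\
    forall k p q, cmod ((Y *m Mc ^+ k) p q) <= K * (rho + eps) ^+ k.
Proof.
move=> rho0 eps0; elim=> [|z ls IH] Hz Y HY.
  rewrite big_nil rmorph1 mulmx1 in HY.
  exists 0; split => // k p q; rewrite HY mul0mx mxE cmod0 mul0r.
  by [].
rewrite big_cons rmorphM /= -mulmxE mulmxA rmorphB /= horner_mx_X horner_mx_C in HY.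
have Hz' : forall z0, z0 \in ls -> cmod z0 <= rho.
  by move=> z0 h; apply: Hz; rewrite inE h orbT.
have [K' [K'0 HK']] := IH Hz' _ HY.
have cz : cmod z <= rho by apply: Hz; rewrite inE eqxx.
set S := \sum_p \sum_q cmod (Y p q).
have S0 : 0 <= S by apply: sumr_ge0 => p _; apply: sumr_ge0 => q _; apply: cmod_ge0.
have YS : forall p q, cmod (Y p q) <= S.
  move=> p q; rewrite /S (bigD1 p) //= (bigD1 q) //= -addrA lerDl.
  apply: addr_ge0; first by apply: sumr_ge0 => ? _; apply: cmod_ge0.
  by apply: sumr_ge0 => ? _; apply: sumr_ge0 => ? _; apply: cmod_ge0.
exists (S + K' / eps); split; first by apply: addr_ge0 => //; apply: divr_ge0 => //; apply: ltW.
elim=> [|k IHk] p q.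
  rewrite expr0 mulmx1 mulr1; apply: le_trans (YS p q) _.
  by rewrite lerDl divr_ge0 // ltW.
have E : Y *m Mc ^+ k.+1 = (Y *m (Mc - z%:M)) *m Mc ^+ k + z *: (Y *m Mc ^+ k).
  by rewrite exprS -mulmxE mulmxA mulmxBr mulmxBl mul_mx_scalar -scalemxAl subrK.
have mD : forall (X Z : 'M[R[i]]_m.+1), (X + Z) p q = X p q + Z p q.
  by move=> X Z; rewrite mxE.
have mZ : forall c (X : 'M[R[i]]_m.+1), (c *: X) p q = c * X p q.
  by move=> c X; rewrite mxE.
rewrite E mD mZ; apply: le_trans (cmodD _ _) _.
rewrite cmodM.
set a := (rho + eps) ^+ k.
have a0 : 0 <= a by apply: exprn_ge0; apply: addr_ge0 => //; apply: ltW.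
have h1 := HK' k p q; have h2 := IHk p q.
have h3 : cmod z * cmod ((Y *m Mc ^+ k) p q) <= rho * ((S + K' / eps) * a).
  by apply: ler_pM => //; apply: cmod_ge0.
apply: le_trans (lerD h1 h3) _.
rewrite exprS -/a.
have h4 : K' <= eps * (S + K' / eps).
  rewrite mulrDr mulrCA divff ?mulr1 ?gt_eqF // lerDr.
  by apply: mulr_ge0 => //; apply: ltW.
have h5 : K' * a <= eps * (S + K' / eps) * a by apply: ler_wpM2r.
apply: le_trans (lerD h5 (lexx _)) _.
rewrite le_eqVlt; apply/orP; left; apply/eqP; ring.
Qed.

End Growth.

Definition cmx (R : realType) m n (M : 'M[R]_(m, n)) : 'M[R[i]]_(m, n) :=
  map_mx (fun x : R => (x%:C)%C) M.

Lemma cmx_mul (R : realType) m n p (M : 'M[R]_(m, n)) (N : 'M[R]_(n, p)) :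
  cmx (M *m N) = cmx M *m cmx N.
Proof. exact: map_mxM. Qed.

Lemma cmx_exp (R : realType) m (M : 'M[R]_m) k : cmx (M ^+ k) = cmx M ^+ k.
Proof.
elim: k => [|k IH]; first by rewrite !expr0 /cmx map_mx1.
by rewrite !exprS -!mulmxE cmx_mul IH.
Qed.

Lemma growth (R : realType) m (M : 'M[R]_m) (rho eps : R) : 0 <= rho -> 0 < eps ->
  (forall l, eigenvalue (cmx M) l -> cmod l <= rho) ->
  exists K, forall k p q, `|(M ^+ k) p q| <= K * (rho + eps) ^+ k.
Proof.
case: m M => [|m] M rho0 eps0 Heig; first by exists 0 => k [].
have [rs Hrs] := closed_field_poly_normal (char_poly (cmx M)).
move: Hrs; rewrite (monicP (char_poly_monic _)) scale1r => Hrs.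
have CH := Cayley_Hamilton (cmx M); rewrite Hrs in CH.
have Hz : forall z, z \in rs -> cmod z <= rho.
  move=> z zin; apply: Heig; rewrite eigenvalue_root_char Hrs.
  by rewrite root_prod_XsubC.
have := @growth_aux _ _ (cmx M) rho eps rho0 eps0 rs Hz 1%:M; rewrite mul1mx => /(_ CH) [K [K0 HK]].
exists K => k p q; have := HK k p q.
by rewrite mul1mx -cmx_exp /cmx mxE cmodR.
Qed.


Lemma bernoulli (R : realType) (q : R) k : 0 <= q -> 1 + k%:R * q <= (1 + q) ^+ k.
Proof.
move=> q0; elim: k => [|k IH]; first by rewrite mul0r addr0 expr0.
rewrite exprS; apply: le_trans (_ : (1 + q) * (1 + k%:R * q) <= _); last first.
  by apply: ler_wpM2l => //; apply: addr_ge0.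
rewrite -natr1 mulrDl mul1r.
have h : 0 <= k%:R * q * q by apply: mulr_ge0 => //; apply: mulr_ge0.
nra.
Qed.

Lemma pow_le (R : realType) (c C x y : R) : 0 < c -> 0 <= x -> 0 < y ->
  (forall k, c * x ^+ k <= C * y ^+ k) -> x <= y.
Proof.
move=> c0 x0 y0 H; rewrite leNgt; apply/negP => yx.
set q := x / y - 1.
have q0 : 0 < q by rewrite subr_gt0 ltr_pdivlMr // mul1r.
have xq : x = (1 + q) * y by rewrite /q addrC subrK mulfVK ?gt_eqF.
have Hk : forall k, c * (1 + k%:R * q) <= C.
  move=> k; have := H k; rewrite xq exprMn mulrA => h.
  have yk : 0 < y ^+ k by apply: exprn_gt0.
  rewrite -(ler_pM2r yk); apply: le_trans h.
  by apply: ler_wpM2r; [apply: ltW | apply: ler_wpM2l; [apply: ltW | apply: bernoulli; apply: ltW]].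
set B := C / (c * q).
have B0 : 0 <= B.
  have := Hk 0%N; rewrite mul0r addr0 mulr1 => cC.
  by apply: divr_ge0; [apply: le_trans cC; apply: ltW | apply: mulr_ge0; apply: ltW].
have := Hk (Num.Def.archi_bound B); have := archi_boundP B0.
set K := (Num.Def.archi_bound B)%:R => hK h.
have cq : 0 < c * q by apply: mulr_gt0.
rewrite /B ltr_pdivrMr // in hK.
nra.
Qed.


Section Tens.
Variables (R : realType) (n : nat).
Local Notation N := (n * n)%N.

Lemma mul_self_ge0 (x : R) : 0 <= x * x.
Proof. by rewrite -expr2 sqr_ge0. Qed.

Definition Kc (X : 'M[R]_N) := exists l : seq (R * 'M[R]_n),
  all (fun t => 0 <= t.1) l /\ X = \sum_(t <- l) t.1 *: (t.2 *t t.2).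

Definition phi (X : 'M[R]_N) : R :=
  \sum_(a < n) \sum_(b < n) X (mxtens_index (a, a)) (mxtens_index (b, b)).

Lemma Kc0 : Kc 0.
Proof. by exists [::]; rewrite big_nil. Qed.

Lemma KcD X Y : Kc X -> Kc Y -> Kc (X + Y).
Proof.
move=> [l1 [h1 ->]] [l2 [h2 ->]]; exists (l1 ++ l2).
by rewrite all_cat h1 h2 big_cat.
Qed.

Lemma KcZ c X : 0 <= c -> Kc X -> Kc (c *: X).
Proof.
move=> c0 [l [h ->]]; exists [seq (c * t.1, t.2) | t <- l]; split.
  by rewrite all_map; apply/allP => t tl /=; apply: mulr_ge0 => //; apply: (allP h).
by rewrite big_map scaler_sumr; apply: eq_bigr => t _; rewrite scalerA.
Qed.

Lemma KcM X (B : 'M[R]_n) : Kc X -> Kc (X *m (B *t B)).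
Proof.
move=> [l [h ->]]; exists [seq (t.1, t.2 *m B) | t <- l]; split.
  by rewrite all_map.
rewrite big_map mulmx_suml; apply: eq_bigr => t _.
by rewrite -scalemxAl tensmx_mul.
Qed.

Lemma Kc_sum (I : finType) (P : pred I) (F : I -> 'M[R]_N) :
  (forall i, P i -> Kc (F i)) -> Kc (\sum_(i | P i) F i).
Proof. by move=> h; apply: big_ind => //; [exact: Kc0 | exact: KcD]. Qed.

Lemma tens11 : (1%:M : 'M[R]_n) *t (1%:M : 'M[R]_n) = 1%:M.
Proof.
apply/matrixP => i j.
case: (mxtens_indexP i) => i0 i1; case: (mxtens_indexP j) => j0 j1.
rewrite tensmxE !mxE (inj_eq (can_inj (@mxtens_indexK _ _))) xpair_eqE.
by case: (i0 == j0); case: (i1 == j1); rewrite /= ?mulr1n ?mulr0n ?mulr1 ?mulr0.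
Qed.

Lemma Kc1 : Kc 1%:M.
Proof. by exists [:: (1, 1%:M)]; rewrite /= ler01 big_seq1 scale1r tens11. Qed.

Lemma phiD X Y : phi (X + Y) = phi X + phi Y.
Proof.
rewrite /phi -big_split; apply: eq_bigr => a _ /=.
by rewrite -big_split; apply: eq_bigr => b _; rewrite mxE.
Qed.

Lemma phiZ c X : phi (c *: X) = c * phi X.
Proof.
rewrite /phi mulr_sumr; apply: eq_bigr => a _ /=.
by rewrite mulr_sumr; apply: eq_bigr => b _; rewrite mxE.
Qed.

Lemma phi0 : phi 0 = 0.
Proof. by rewrite /phi big1 // => a _; rewrite big1 // => b _; rewrite mxE. Qed.

Lemma phi_sum (I : finType) (P : pred I) (F : I -> 'M[R]_N) :
  phi (\sum_(i | P i) F i) = \sum_(i | P i) phi (F i).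
Proof.
by apply: (big_morph phi) => [X Y|]; [exact: phiD | exact: phi0].
Qed.

Lemma sq_le_sum (M : 'M[R]_n) a c :
  M a c * M a c <= \sum_(a' < n) \sum_(b' < n) M a' b' * M a' b'.
Proof.
rewrite (bigD1 a) //= (bigD1 c) //= -addrA lerDl.
apply: addr_ge0; first by apply: sumr_ge0 => ? _; apply: mul_self_ge0.
by apply: sumr_ge0 => ? _; apply: sumr_ge0 => ? _; apply: mul_self_ge0.
Qed.

Lemma Kc_bound X : Kc X -> 0 <= phi X /\ forall p q, `|X p q| <= phi X.
Proof.
move=> [l [h ->]]; elim: l h => [|[c M] l IH] /=.
  by move=> _; rewrite big_nil phi0; split => // p q; rewrite mxE normr0.
move=> /andP[c0 hl]; have [IH1 IH2] := IH hl.
rewrite big_cons /= phiD phiZ.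
have phiMM : phi (M *t M) = \sum_(a < n) \sum_(b < n) M a b * M a b.
  by apply: eq_bigr => a _; apply: eq_bigr => b _; rewrite tensmxE.
have pM0 : 0 <= phi (M *t M).
  by rewrite phiMM; apply: sumr_ge0 => ? _; apply: sumr_ge0 => ? _; apply: mul_self_ge0.
split; first by apply: addr_ge0 => //; apply: mulr_ge0.
move=> p q.
have mD : forall (X1 Z : 'M[R]_N), (X1 + Z) p q = X1 p q + Z p q by move=> X1 Z; rewrite mxE.
have mZ : forall c1 (X1 : 'M[R]_N), (c1 *: X1) p q = c1 * X1 p q by move=> c1 X1; rewrite mxE.
rewrite mD mZ.
apply: le_trans (ler_normD _ _) _; apply: lerD; last exact: IH2.
rewrite normrM ger0_norm //; apply: ler_wpM2l => //.
case: (mxtens_indexP p) => a b; case: (mxtens_indexP q) => a' b'.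
rewrite tensmxE phiMM.
have h1 := sq_le_sum M a a'; have h2 := sq_le_sum M b b'.
set S := \sum_(a0 < n) _ in h1 h2 *.
rewrite normrM.
have e1 : `|M a a'| * `|M a a'| = M a a' * M a a' by rewrite -normrM ger0_norm // mul_self_ge0.
have e2 : `|M b b'| * `|M b b'| = M b b' * M b b' by rewrite -normrM ger0_norm // mul_self_ge0.
have n1 := normr_ge0 (M a a'); have n2 := normr_ge0 (M b b').
nra.
Qed.

End Tens.

Section JSR.
Variable R : realType.

Lemma mxprod_map (m m' n : nat) (M : 'I_m -> 'M[R]_n) (g : 'I_m' -> 'I_m)
  (l : seq 'I_m') :
  mxprod (fun i => M (g i)) l = mxprod M [seq g i | i <- l].
Proof. by elim: l => //= a l; rewrite /mxprod /= => ->. Qed.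

Lemma jsr_lift (s r n : nat) (M : 'I_r -> 'M[R]_n) (f : 'I_s -> 'I_r) :
  (forall k : 'I_r, exists i : 'I_s, f i = k) ->
  jsr M = jsr (fun i => M (f i)).
Proof.
move=> fsurj.
have g : forall k : 'I_r, {i : 'I_s | f i == k}.
  by move=> k; apply: sigW; have [i <-] := fsurj k; exists i.
rewrite /jsr; do 3 f_equal; apply/funext => k; congr (_ `^ _).
apply/le_anti/andP; split.
- apply/bigmax_leP; split; first exact: bigmax_ge_id.
  move=> sg _; apply/bigmax_geP; right.
  exists [ffun i => sval (g (sg i))] => //.
  rewrite (mxprod_map M f) -map_comp le_eqVlt; apply/orP; left; apply/eqP; do 2 apply: congr1; apply: eq_map => i /=.
  by rewrite ffunE; case: (g (sg i)) => j /= /eqP ->.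
- apply/bigmax_leP; split; first exact: bigmax_ge_id.
  move=> sg _; apply/bigmax_geP; right.
  exists [ffun i => f (sg i)] => //.
  rewrite (mxprod_map M f) -map_comp le_eqVlt; apply/orP; left; apply/eqP; do 2 apply: congr1; apply: eq_map => i /=.
  by rewrite ffunE.
Qed.

End JSR.


Section Main.
Variables (R : realType) (n s r : nat) (A : 'I_s -> 'M[R]_n) (T : 'M[R]_s)
  (f : 'I_s -> 'I_r) (Tbar : 'M[R]_s).
Hypothesis Tb0 : forall i j, 0 <= Tbar i j.
Hypothesis Hsum : forall (i : 'I_s) (l : 'I_r),
  \sum_(j < s | f j == l) Tbar i j = redT T f (f i) l.

Local Notation N := (n * n)%N.
Local Notation Ah := (redA A f).
Local Notation Th := (redT T f).
Local Notation Mh := (augA Th Ah).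
Local Notation Mb := (augA Tbar (fun i => Ah (f i))).

Definition Smx : 'M[R]_(\sum_(l < r) N, \sum_(i < s) N) :=
  mxblock (fun (l : 'I_r) (i : 'I_s) => ((f i == l)%:R *: 1%:M : 'M[R]_N)).

Definition sbs (X : 'M[R]_(\sum_(i < s) N)) i j : 'M[R]_N :=
  @submxblock R s s (fun=> N) (fun=> N) X i j.
Definition sbr (X : 'M[R]_(\sum_(i < r) N)) i j : 'M[R]_N :=
  @submxblock R r r (fun=> N) (fun=> N) X i j.

Lemma KI : Mh *m Smx = Smx *m Mb.
Proof.
rewrite /augA /Smx !mul_mxblock; apply: eq_mxblock => l i.
rewrite (bigD1 (f i)) //= eqxx mulr1n scale1r mulmx1 big1 ?addr0; last first.
  by move=> j /negbTE hj; rewrite eq_sym hj mulr0n scale0r mulmx0.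
have -> : \sum_j ((f j == l)%:R *: (1%:M : 'M[R]_N)) *m (Tbar i j *: (Ah (f i) *t Ah (f i)))
   = \sum_j ((f j == l)%:R * Tbar i j) *: (Ah (f i) *t Ah (f i)).
  by apply: eq_bigr => j _; rewrite -scalemxAl mul1mx scalerA.
rewrite -scaler_suml -Hsum big_mkcond /=; congr (_ *: _).
by apply: eq_bigr => j _; case: (f j == l); rewrite ?mul1r ?mul0r.
Qed.

Lemma KIk k : Mh ^+ k *m Smx = Smx *m Mb ^+ k.
Proof.
elim: k => [|k IH]; first by rewrite !expr0 mul1mx mulmx1.
by rewrite !exprS -!mulmxE -mulmxA IH mulmxA KI -mulmxA.
Qed.

Lemma blk k : forall i j, Kc (sbs (Mb ^+ k) i j).
Proof.
elim: k => [|k IH] i j.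
  have -> : (Mb ^+ 0) = \mxdiag_(i < s) (1%:M : 'M[R]_N) by rewrite mxdiagZ.
  rewrite /sbs /mxdiag mxblockK; have [_|ne] := eqVneq i j; last exact: Kc0.
  by rewrite conform_mx_id; exact: Kc1.
rewrite exprSr -mulmxE; set Mk := Mb ^+ k.
rewrite -[Mk](@submxblockK R s s (fun=> N) (fun=> N)) /augA mul_mxblock /sbs mxblockK.
apply: Kc_sum => l _; rewrite -scalemxAr; apply: KcZ => //; apply: KcM; exact: IH.
Qed.

Lemma agg k l j : \sum_(i | f i == l) sbs (Mb ^+ k) i j = sbr (Mh ^+ k) l (f j).
Proof.
have := congr1 (fun X => @submxblock R r s (fun=> N) (fun=> N) X l j) (KIk k).
set Xh := Mh ^+ k; set Xb := Mb ^+ k => /=.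
rewrite -[Xh](@submxblockK R r r (fun=> N) (fun=> N)).
rewrite -[Xb](@submxblockK R s s (fun=> N) (fun=> N)).
rewrite /Smx !mul_mxblock !mxblockK.
rewrite (bigD1 (f j)) //= eqxx mulr1n scale1r mulmx1 big1 ?addr0; last first.
  by move=> j' /negbTE hj; rewrite eq_sym hj mulr0n scale0r mulmx0.
rewrite /sbr /sbs !submxblockK => ->; rewrite big_mkcond /=; apply: eq_bigr => i _.
by case: (f i == l); rewrite ?mulr1n ?scale1r ?mul1mx ?mulr0n ?scale0r ?mul0mx.
Qed.


Lemma entry_blk (m : nat) (X : 'M[R]_(\sum_(i < m) N)) s1 s2 :
  X s1 s2 = @submxblock R m m (fun=> N) (fun=> N) X
    (@tagnat.sig1 m (fun=> N) s1) (@tagnat.sig1 m (fun=> N) s2)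
    (@tagnat.sig2 m (fun=> N) s1) (@tagnat.sig2 m (fun=> N) s2).
Proof. by rewrite /submxblock /mxsub mxE !tagnat.sig2K. Qed.

Lemma le_sum_term (I : finType) (P : pred I) (F : I -> R) j :
  P j -> (forall i, P i -> 0 <= F i) -> F j <= \sum_(i | P i) F i.
Proof.
move=> Pj F0; rewrite (bigD1 j) //= lerDl.
by apply: sumr_ge0 => i /andP[Pi _]; exact: F0.
Qed.

Lemma single_le (I J : finType) (F : I -> J -> R) u v :
  (forall i j, 0 <= F i j) -> F u v <= \sum_i \sum_j F i j.
Proof.
move=> F0; rewrite (bigD1 u) //= (bigD1 v) //= -addrA lerDl.
apply: addr_ge0; first by apply: sumr_ge0 => ? _; apply: F0.
by apply: sumr_ge0 => ? _; apply: sumr_ge0 => ? _; apply: F0.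
Qed.

Lemma Mb_bound k s1 s2 :
  `|(Mb ^+ k) s1 s2| <= N%:R * \sum_u \sum_v `|(Mh ^+ k) u v|.
Proof.
rewrite entry_blk.
set i0 := tagnat.sig1 s1; set j := tagnat.sig1 s2.
have [_ H] := Kc_bound (blk k i0 j); apply: le_trans (H _ _) _.
have : phi (sbs (Mb ^+ k) i0 j) <= phi (sbr (Mh ^+ k) (f i0) (f j)).
  rewrite -agg phi_sum; apply: le_sum_term => // i _.
  exact: (Kc_bound (blk k i j)).1.
move/le_trans; apply.
set Tot := \sum_u \sum_v `|(Mh ^+ k) u v|.
apply: le_trans (_ : \sum_(a < n) \sum_(b < n) Tot <= _); last first.
  by rewrite !sumr_const !card_ord -mulrnA mulr_natl.
apply: ler_sum => a _; apply: ler_sum => b _.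
rewrite /sbr /submxblock /mxsub mxE; apply: le_trans (ler_norm _) _.
by apply: (single_le (F := fun u v => `|(Mh ^+ k) u v|)) => ? ?.
Qed.

Variable g : 'I_r -> 'I_s.
Hypothesis fg : forall l, f (g l) = l.

Definition Sg : 'M[R]_(\sum_(i < s) N, \sum_(l < r) N) :=
  mxblock (fun (i : 'I_s) (l : 'I_r) => ((g l == i)%:R *: 1%:M : 'M[R]_N)).

Lemma SSg : Smx *m Sg = 1%:M.
Proof.
rewrite /Smx /Sg mul_mxblock -(@mxdiagZ R r (fun=> N) 1) /mxdiag.
apply: eq_mxblock => l l'.
rewrite (bigD1 (g l')) //= eqxx mulr1n scale1r mulmx1 big1 ?addr0; last first.
  by move=> i /negbTE hi; rewrite (eq_sym (g l')) hi mulr0n scale0r mulmx0.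
rewrite fg; have [_|ne] := eqVneq l' l.
  by rewrite mulr1n scale1r conform_mx_id.
by rewrite mulr0n scale0r.
Qed.

Lemma eig_incl l : eigenvalue (cmx Mh) l -> eigenvalue (cmx Mb) l.
Proof.
move/eigenvalueP => [v Hv v0]; apply/eigenvalueP; exists (v *m cmx Smx).
  by rewrite -mulmxA -cmx_mul -KI cmx_mul mulmxA Hv -scalemxAl.
apply: contra v0 => /eqP h; apply/eqP.
have e1 : cmx (1%:M : 'M[R]_(\sum_(l < r) N)) = 1%:M := map_mx1 (@real_complex R) _.
by rewrite -[v]mulmx1 -e1 -SSg cmx_mul mulmxA h mul0mx.
Qed.


Lemma eig_bound mu rho : 0 <= rho ->
  (forall l, eigenvalue (cmx Mh) l -> cmod l <= rho) ->
  eigenvalue (cmx Mb) mu -> cmod mu <= rho.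
Proof.
move=> rho0 Hh /eigenvalueP [w Hw w0].
have /existsP [p wp] : [exists p, w 0 p != 0].
  apply: contraR w0 => /existsPn h; apply/eqP/rowP => p.
  by rewrite mxE; apply/eqP; rewrite -[_ == _]negbK h.
have Hk : forall k, w *m cmx Mb ^+ k = mu ^+ k *: w.
  elim=> [|k IH]; first by rewrite !expr0 mulmx1 scale1r.
  by rewrite exprSr -mulmxE mulmxA IH -scalemxAl Hw scalerA -exprSr.
apply/ler_addgt0Pr => eps eps0.
have [K HK] := growth rho0 eps0 Hh.
set W := \sum_q cmod (w 0 q).
set DK := \sum_(u : 'I_(\sum_(i < r) N)) \sum_(v : 'I_(\sum_(i < r) N)) K.
have re0 : 0 < rho + eps by apply: ltr_wpDl.
have cp : 0 < cmod (w 0 p).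
  rewrite lt_def cmod_ge0 andbT; apply: contra wp => /eqP h.
  by apply/eqP; apply: cmod_eq0.
apply: (@pow_le _ (cmod (w 0 p)) (W * (N%:R * DK))) => // [|k]; first exact: cmod_ge0.
have -> : cmod (w 0 p) * cmod mu ^+ k = cmod ((w *m cmx Mb ^+ k) 0 p).
  by rewrite Hk mxE cmodM cmodX mulrC.
rewrite -cmx_exp mxE; apply: le_trans (cmod_sum _ _ _) _.
have Tk : \sum_u \sum_v `|(Mh ^+ k) u v| <= DK * (rho + eps) ^+ k.
  rewrite /DK mulr_suml; apply: ler_sum => u _; rewrite mulr_suml.
  by apply: ler_sum => v _; apply: HK.
apply: le_trans (_ : \sum_q cmod (w 0 q) * (N%:R * (DK * (rho + eps) ^+ k)) <= _).
  apply: ler_sum => q _; rewrite /cmx mxE cmodM cmodR.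
  apply: ler_wpM2l; first exact: cmod_ge0.
  apply: le_trans (Mb_bound k q p) _.
  by apply: ler_wpM2l => //; apply: ler0n.
by rewrite -mulr_suml -/W !mulrA le_refl.
Qed.

End Main.


Section SupPart.
Variable R : realType.
Local Open Scope classical_set_scope.

Lemma sup_ge0 (E : set R) : has_ubound E -> (forall x, E x -> 0 <= x) -> 0 <= sup E.
Proof.
move=> ub E0; have [->|/set0P [x Ex]] := eqVneq E set0; first by rewrite sup0.
by apply: le_trans (E0 _ Ex) _; apply: ub_le_sup.
Qed.

Lemma sup_eq (E1 E2 : set R) : has_ubound E1 -> has_ubound E2 ->
  (forall x, E1 x -> 0 <= x) -> (forall x, E2 x -> 0 <= x) ->
  E1 `<=` E2 -> (forall x, E2 x -> x <= sup E1) -> sup E1 = sup E2.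
Proof.
move=> ub1 ub2 E10 E20 sub H; apply/le_anti/andP; split.
  have [->|/set0P [x Ex]] := eqVneq E1 set0; first by rewrite sup0 sup_ge0.
  apply: sup_le; [|by exists x|by split; [exists x; apply: sub|]].
  by move=> y Ey; exists y; split => //; apply: sub.
have [->|/set0P ne] := eqVneq E2 set0; first by rewrite sup0 sup_ge0.
by apply: ge_sup => // y Ey; apply: H.
Qed.

Lemma eig_ub m (M : 'M[R]_m) :
  has_ubound [set cmod l | l in [set l : R[i] | eigenvalue (cmx M) l]].
Proof.
have [rs Hrs] := closed_field_poly_normal (char_poly (cmx M)).
move: Hrs; rewrite (monicP (char_poly_monic _)) scale1r => Hrs.
exists (\sum_(z <- rs) cmod z) => _ [l /= Hl <-].
move: Hl; rewrite eigenvalue_root_char Hrs root_prod_XsubC => lin.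
rewrite (big_rem l lin) /= lerDl; apply: sumr_ge0 => z _; exact: cmod_ge0.
Qed.

Lemma eig_ge0 m (M : 'M[R]_m) x :
  [set cmod l | l in [set l : R[i] | eigenvalue (cmx M) l]] x -> 0 <= x.
Proof. by move=> [l _ <-]; apply: cmod_ge0. Qed.

End SupPart.

Theorem lemma2 (R : realType) (n s r : nat)
  (A : 'I_s -> 'M[R]_n) (T : 'M[R]_s) (f : 'I_s -> 'I_r) (Tbar : 'M[R]_s) :
  stochastic_mx T ->
  (forall k : 'I_r, exists i : 'I_s, f i = k) ->
  stochastic_mx Tbar ->
  (forall (i : 'I_s) (l : 'I_r),
      \sum_(j < s | f j == l) Tbar i j = redT T f (f i) l) ->
  specrad (augA (redT T f) (redA A f)) =
    specrad (augA Tbar (fun i => redA A f (f i))) /\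
  jsr (redA A f) = jsr (fun i => redA A f (f i)).
Proof.
move=> Tst fsurj Tbst Hsum; split; last exact: jsr_lift.
have g : forall k : 'I_r, {i : 'I_s | f i == k}.
  by move=> k; apply: sigW; have [i <-] := fsurj k; exists i.
have fg : forall l, f (sval (g l)) = l by move=> l; case: (g l) => i /= /eqP.
have Tb0 : forall i j, 0 <= Tbar i j by case: Tbst.
rewrite /specrad; apply: sup_eq; [exact: eig_ub|exact: eig_ub|exact: eig_ge0|exact: eig_ge0| | ].
  move=> _ [l /= Hl <-]; exists l => //=.
  exact: (eig_incl Hsum fg).
move=> _ [mu /= Hmu <-]; apply: (@eig_bound R n s r A T f Tbar Tb0 Hsum).
- by apply: sup_ge0; [exact: eig_ub | exact: eig_ge0].
- move=> l Hl; apply: ub_le_sup; first exact: eig_ub.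
  by exists l.
- exact: Hmu.
Qed.
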